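(* For every $n\ge 1$, \[ |\mathrm{End}(P_n)| = \begin{cases} (n+1)2^{n-1} - (2n-1)\binom{n-1}{(n-1)/2} & \text{if } n \text{ is odd},\\[2pt] (n+1)2^{n-1} - n\binom{n}{n/2} & \text{if } n \text{ is even}.\end{cases} \]
   Context: For a positive integer $n$, $P_n$ denotes the path with vertex set $[n]=\{1,\dots,n\}$ in which $i$ and $j$ are adjacent iff $|i-j|=1$. $\mathrm{End}(P_n)$ is the set of endomorphisms of $P_n$, i.e. maps $f:[n]\to[n]$ with $|f(i)-f(i+1)|=1$ for all $1\le i\le n-1$. *)

(* Defs.v *)
From mathcomp Require Import all_boot all_order all_algebra.
Set Implicit Arguments. Unset Strict Implicit. Unset Printing Implicit Defensive.

(* Vertex i of P_n (1 <= i <= n) is represented by the ordinal i-1 : 'I_n.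
   Adjacency in P_n: |i - j| = 1. *)
Definition path_adj (n : nat) (i j : 'I_n) : bool :=
  (i.+1 == j :> nat) || (j.+1 == i :> nat).

Definition is_endo (n : nat) (f : {ffun 'I_n -> 'I_n}) : bool :=
  [forall i : 'I_n, forall j : 'I_n, (i.+1 == j :> nat) ==> path_adj (f i) (f j)].

Definition End_path (n : nat) : {set {ffun 'I_n -> 'I_n}} := [set f | is_endo f].

(* Main.v *)
Require Import Defs.
From mathcomp Require Import all_boot all_order all_algebra.
Import GRing.Theory Num.Theory.

Lemma card_split (T : finType) k (P : seq T -> bool) :
  #|[set t : k.+1.-tuple T | P t]| =
  \sum_(x : T) #|[set t : k.-tuple T | P (x :: t)]|.
Proof.
rewrite -sum1_card.
rewrite (reindex (fun p : T * k.-tuple T => [tuple of p.1 :: p.2])) /=; last first.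
  exists (fun t : k.+1.-tuple T => (thead t, [tuple of behead t])).
    by move=> [x t] _ /=; congr pair; apply: val_inj.
  by move=> t _; apply: val_inj => /=; case: t => [[|x s] //].
symmetry; under eq_bigr do rewrite -sum1_card.
rewrite pair_big_dep /=; apply: eq_bigl => -[x t]; by rewrite !inE.
Qed.

Lemma endo_sorted n (f : {ffun 'I_n -> 'I_n}) :
  is_endo f = sorted (@path_adj n) (tuple_of_finfun f).
Proof.
case: n f => [|n] f.
  have -> : is_endo f by apply/forallP => -[].
  by rewrite /tuple_of_finfun /= enum_ord0.
have sz : size (tuple_of_finfun f) = n.+1 by rewrite size_tuple.
apply/forallP/(sortedP ord0).
- move=> H i; rewrite sz => lt.
  have lt' : i < n.+1 by apply: ltnW.
  have := H (Ordinal lt') => /forallP /(_ (Ordinal lt)) /=; rewrite eqxx /=.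
  rewrite /tuple_of_finfun -(nth_mktuple f ord0 (Ordinal lt')) -(nth_mktuple f ord0 (Ordinal lt)) //.
- move=> H i; apply/forallP => j; apply/implyP => /eqP eij.
  have Hi := H i; rewrite sz eij ltn_ord in Hi; have := Hi isT.
  by rewrite /tuple_of_finfun !(nth_mktuple f).
Qed.

Definition cnt {m} k (x : 'I_m) := #|[set t : k.-tuple 'I_m | path (@path_adj m) x t]|.

Lemma card_End n : #|End_path n| = #|[set t : n.-tuple 'I_n | sorted (@path_adj n) t]|.
Proof.
rewrite -!sum1_card (reindex (@finfun_of_tuple _ n)) /=; last first.
  by exists (@tuple_of_finfun _ n) => x _; [apply: finfun_of_tupleK|apply: tuple_of_finfunK].
by apply: eq_bigl => t; rewrite !inE endo_sorted finfun_of_tupleK.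
Qed.

Lemma card_End_cnt n : #|End_path n.+1| = \sum_(x : 'I_n.+1) cnt n x.
Proof. by rewrite card_End card_split. Qed.

Lemma cnt0 m (x : 'I_m) : cnt 0 x = 1%N.
Proof.
rewrite /cnt.
have -> : [set t : 0.-tuple 'I_m | path (@path_adj m) x t] = setT.
  by apply/setP => t; rewrite !inE tuple0.
by rewrite cardsT card_tuple.
Qed.

Lemma cntS m k (x : 'I_m) : cnt k.+1 x = \sum_(y : 'I_m) (path_adj x y * cnt k y)%N.
Proof.
rewrite /cnt card_split; apply: eq_bigr => y _ /=.
case: (path_adj x y) => /=; first by rewrite mul1n.
by rewrite mul0n -(cards0 (k.-tuple 'I_m)); congr #|_|; apply/setP => t; rewrite !inE.
Qed.

From mathcomp Require Import zify ring lra.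
Local Open Scope ring_scope.
Import Order.TTheory.

Fixpoint Wf (m : nat) (L : nat) (s : int) : int :=
  if (0 <= s) && (s < m%:Z) then
    (match L with 0 => 1 | L'.+1 => Wf m L' (s - 1) + Wf m L' (s + 1) end)
  else 0.

Lemma sum_ind (m a : nat) (F : nat -> int) :
  \sum_(y < m) ((y == a :> nat)%:R * F y) = if (a < m)%N then F a else 0.
Proof.
elim: m => [|m IH]; first by rewrite big_ord0.
rewrite big_ord_recr /= IH.
case: (ltngtP a m) => [h|h|->]; rewrite /= ?mul0r ?mul1r ?addr0 ?add0r.
- by have -> : (a < m.+1)%N by lia.
- by have -> : (a < m.+1)%N = false by lia.
- by rewrite ltnSn.
Qed.

Lemma Wf_out m L s : ~~ ((0 <= s) && (s < m%:Z)) -> Wf m L s = 0.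
Proof. by case: L => [|L] /= /negPf ->. Qed.

Lemma cnt_W m k (x : 'I_m) : (cnt k x)%:Z = Wf m k x.
Proof.
elim: k x => [|k IH] x.
  by rewrite cnt0 /= ltz_nat ltn_ord.
rewrite cntS /= ltz_nat ltn_ord /= -natz natr_sum.
have E : forall y : 'I_m, ((path_adj x y * cnt k y)%N%:R : int) =
   ((y : nat).+1 == x)%:R * Wf m k (y : nat) + ((y == x.+1 :> nat))%:R * Wf m k (y : nat).
  move=> y; rewrite natrM (natz (cnt k y)) IH /path_adj.
  have : ~~ (((y:nat).+1 == x) && ((y:nat) == x.+1)) by apply/negP => /andP[/eqP ? /eqP ?]; lia.
  rewrite [x.+1 == _]eq_sym.
  by case: ((y:nat).+1 == x); case: ((y:nat) == x.+1) => //= _; rewrite ?mul1r ?mul0r ?addr0 ?add0r.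
rewrite (eq_bigr _ (fun y _ => E y)) big_split /= (sum_ind m x.+1 (fun y => Wf m k y)).
have -> : Wf m k ((x:nat)%:Z + 1) = if (x.+1 < m)%N then Wf m k x.+1 else 0.
  case: ifP => h; first by congr Wf; lia.
  by rewrite Wf_out //; apply/negP => /andP[_ hh]; move/negbT: h; lia.
congr (_ + _).
case eqx: (x : nat) => [|x'].
  rewrite big1 ?add0r; last by move=> i _; rewrite mul0r.
  by rewrite Wf_out.
rewrite (eq_bigr (fun y : 'I_m => ((y : nat) == x')%:R * Wf m k y)) //.
rewrite (sum_ind m x' (fun y => Wf m k y)).
have -> : (x' < m)%N by have := ltn_ord x; lia.
by congr Wf; lia.
Qed.

Fixpoint G (L : nat) (s : int) : int :=
  if s < 0 then 0 else
    match L with 0 => 1 | L'.+1 => G L' (s - 1) + G L' (s + 1) end.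

Lemma G_neg L s : s < 0 -> G L s = 0.
Proof. by case: L => [|L] /= ->. Qed.

Lemma G_S L s : 0 <= s -> G L.+1 s = G L (s - 1) + G L (s + 1).
Proof. by move=> h /=; rewrite ltNge h. Qed.

Lemma G_big L s : L%:Z <= s -> G L s = 2 ^+ L.
Proof.
elim: L s => [|L IH] s h /=; first by rewrite ltNge h.
rewrite ltNge (_ : 0 <= s); last by lia.
rewrite !IH ?exprS; try lia.
by rewrite mulr2n mulrDl mul1r.
Qed.

Lemma WG m L s : (L <= m)%N -> -1 <= s <= m%:Z ->
  Wf m L s = G L s + G L (m%:Z - 1 - s) - 2 ^+ L.
Proof.
elim: L s => [|L IH] s hL /andP[h1 h2].
  by rewrite /= expr0; do 3 case: ifP => ?; lia.
have [hin|hout] := boolP ((0 <= s) && (s < m%:Z)).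
  rewrite /= hin.
  move/andP: hin => [hs0 hsm].
  rewrite !ltNge hs0 (_ : 0 <= m%:Z - 1 - s) /=; last by lia.
  rewrite !IH; try (apply/andP; split; lia); try lia.
  have -> : m%:Z - 1 - (s - 1) = m%:Z - 1 - s + 1 by ring.
  have -> : m%:Z - 1 - (s + 1) = m%:Z - 1 - s - 1 by ring.
  rewrite exprS; lia.
rewrite Wf_out //.
have [e|e] : s = -1 \/ s = m%:Z by lia.
  rewrite e G_neg // G_big; last by lia.
  by rewrite add0r subrr.
rewrite e (G_neg _ (m%:Z - 1 - m%:Z)); last by lia.
by rewrite G_big ?addr0 ?subrr //; lia.
Qed.

Definition phi (L s k : nat) : bool := (L <= 2 * k + s + 1)%N && (2 * k <= L + s)%N.
Definition psi (L s k : nat) : bool := if s is s'.+1 then phi L s' k else false.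

Lemma phi_id L s k :
  (phi L.+1 s k)%:R + (phi L.+1 s k.+1)%:R = (psi L s k)%:R + (phi L s.+1 k)%:R :> int.
Proof.
rewrite /psi /phi; case: s => [|s];
repeat match goal with |- context [leq ?a ?b] => let H := fresh in destruct (leq a b) eqn:H end;
rewrite /= ?addr0 ?add0r //; lia.
Qed.

Lemma pascal_sum L (f : nat -> int) :
  \sum_(k < L.+2) ('C(L.+1, k))%:R * f k = \sum_(k < L.+1) ('C(L, k))%:R * (f k + f k.+1).
Proof.
rewrite big_ord_recl /= bin0 mul1r.
under eq_bigr do rewrite binS natrD mulrDl.
rewrite big_split /=.
under [RHS]eq_bigr do rewrite mulrDr.
rewrite [RHS]big_split /= addrA; congr (_ + _).
rewrite [RHS]big_ord_recl bin0 mul1r; congr (_ + _).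
by rewrite big_ord_recr /= bin_small // mul0r addr0.
Qed.

Lemma G_closed L (s : nat) :
  G L s = \sum_(k < L.+1) ('C(L, k))%:R * (phi L s k)%:R.
Proof.
elim: L s => [|L IH] s.
  by rewrite /= big_ord1 bin0 /phi /= mul1r.
have Hm : G L (s%:Z - 1) = \sum_(k < L.+1) ('C(L, k))%:R * (psi L s k)%:R.
  case: s => [|s].
    rewrite G_neg // big1 // => k _; by rewrite mulr0.
  by rewrite (_ : (s.+1)%:Z - 1 = s%:Z) ?IH //; lia.
rewrite G_S // Hm (_ : s%:Z + 1 = (s.+1)%:Z); last by lia.
rewrite IH -big_split /= (pascal_sum L (fun k => (phi L.+1 s k)%:R)); apply: eq_bigr => k _.
by rewrite -mulrDr phi_id.
Qed.

Lemma G0 L : G L 0 = ('C(L, L./2))%:R.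
Proof.
rewrite (G_closed L 0).
rewrite (eq_bigr (fun k : 'I_L.+1 => ((k : nat) == L./2)%:R * ('C(L, k))%:R : int)).
  rewrite (sum_ind _ _ (fun k => ('C(L, k))%:R)) ifT //.
  by have := odd_double_half L; case: (odd L) => /= h; lia.
move=> k _; rewrite mulrC; congr (_ * _); congr ((nat_of_bool _)%:R).
have h := odd_double_half L; rewrite /phi; case: (odd L) h => /= h;
  apply/andP/eqP => [[a b]|->]; try lia; split; lia.
Qed.

Definition S (L : nat) : int := \sum_(x < L.+1) G L (x : nat)%:Z.

Lemma S_rec L : S L.+1 = 2 * S L + 2 * 2 ^+ L - G L 0.
Proof.
rewrite /S.
rewrite (eq_bigr (fun x : 'I_L.+2 => G L ((x : nat)%:Z - 1) + G L ((x : nat)%:Z + 1))); last first.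
  by move=> x _; rewrite G_S.
rewrite big_split /=.
have A : \sum_(x < L.+2) G L ((x : nat)%:Z - 1) = \sum_(x < L.+1) G L (x : nat)%:Z.
  rewrite big_ord_recl /= G_neg // add0r; apply: eq_bigr => x _.
  by congr G; rewrite /bump /=; lia.
have B : \sum_(x < L.+3) G L (x : nat)%:Z =
   G L 0 + \sum_(x < L.+2) G L ((x : nat)%:Z + 1).
  rewrite big_ord_recl /=; congr (_ + _); apply: eq_bigr => x _.
  by congr G; rewrite /bump /=; lia.
have C : \sum_(x < L.+3) G L (x : nat)%:Z =
   \sum_(x < L.+1) G L (x : nat)%:Z + 2 ^+ L + 2 ^+ L.
  rewrite big_ord_recr big_ord_recr /= !G_big //; lia.
rewrite A; move: B; rewrite C.
set s1 := \sum_(x < L.+1) _; set s2 := \sum_(x < L.+2) _; set g := G L 0; set p := 2 ^+ L.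
move=> B; lia.
Qed.

Definition cn (L : nat) : nat :=
  if odd L then (L.+1 * 'C(L.+1, (L.+1)./2))%N else ((2 * L).+1 * 'C(L, L./2))%N.

Lemma bin_facts m : 'C(m.*2.+2, m.+1) = (2 * 'C(m.*2.+1, m))%N /\
   (m.+1 * 'C(m.*2.+1, m) = m.*2.+1 * 'C(m.*2, m))%N.
Proof.
have sym : 'C(m.*2.+1, m.+1) = 'C(m.*2.+1, m).
  rewrite -(bin_sub (_ : m <= m.*2.+1)%N); last by lia.
  by congr binomial; lia.
split; first by rewrite binS sym; lia.
have := mul_bin_diag m.*2.+1 m; rewrite /= sym => ->; lia.
Qed.

Lemma cn_rec L : cn L.+1 = (2 * cn L + 2 * 'C(L, L./2))%N.
Proof.
rewrite /cn /=.
have [m [-> | ->]] : exists m, L = m.*2 \/ L = m.*2.+1.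
  exists L./2; have := odd_double_half L; case: (odd L) => /= h; lia.
- rewrite odd_double /= doubleK.
  have [h1 h2] := bin_facts m.
  rewrite h1; rewrite -!muln2 in h1 h2 *; nia.
- rewrite /= odd_double /= !uphalf_double.
  have [h1 h2] := bin_facts m.
  rewrite doubleK h1; rewrite -!muln2 in h1 h2 *; nia.
Qed.

Lemma S_closed L : 2 * S L + (cn L)%:Z = (2 * L%:Z + 3) * 2 ^+ L.
Proof.
elim: L => [|L IH].
  by rewrite /S big_ord1 /= /cn /=.
rewrite S_rec G0 cn_rec exprS.
set s := S L in IH *; set p := 2 ^+ L in IH *; set c := 'C(L, L./2) in IH *.
rewrite -natz.
nia.
Qed.

Lemma total L : (#|End_path L.+1|)%:Z = 2 * S L - (L.+1)%:Z * 2 ^+ L.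
Proof.
rewrite card_End_cnt -natz natr_sum.
rewrite (eq_bigr (fun x : 'I_L.+1 => G L (x : nat)%:Z + G L (L%:Z - (x : nat)%:Z) - 2 ^+ L)); last first.
  move=> x _; rewrite natz cnt_W WG //; last by have := ltn_ord x; lia.
  by congr (_ + G L _ - _); lia.
rewrite sumrB big_split /= sumr_const card_ord.
have -> : \sum_(x < L.+1) G L (L%:Z - (x : nat)%:Z) = S L.
  rewrite /S (reindex_inj rev_ord_inj) /=; apply: eq_bigr => x _.
  by congr G; rewrite subSS; have := ltn_ord x; lia.
rewrite -/(S L) -mulr_natl; lia.
Qed.

Theorem mainTheorem7 (n : nat) (hn : (1 <= n)%N) :
  (#|End_path n|%:Z =
   if odd n then
     ((n + 1) * 2 ^ (n - 1))%N%:Z - ((2 * n - 1) * 'C(n - 1, (n - 1)./2))%N%:Z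
   else
     ((n + 1) * 2 ^ (n - 1))%N%:Z - (n * 'C(n, n./2))%N%:Z).
Proof.
case: n hn => [//|L] _.
rewrite total.
have h := S_closed L.
have e : (L.+1 - 1 = L)%N by lia.
rewrite e !PoszM -[Posz (2 ^ L)]natz natrX /=.
move: h; rewrite /cn.
set p := 2 ^+ L; set s := S L.
case: (odd L) => /= h.
  rewrite PoszM in h. nia.
rewrite PoszM (_ : (2 * L.+1 - 1)%N = (2 * L).+1) in h *; last by lia.
nia.
Qed.
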